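(* In the drift-less setting, let $\rho_d=|\Psi\rangle\langle\Psi|$ be QLS but not DQLS, and suppose $\mathcal H_0=\mathrm{span}\{|\Psi\rangle,|\Phi_1\rangle\}$ with $|\Psi\rangle,|\Phi_1\rangle$ orthonormal. Then there exists a QL Hamiltonian $H_c$ such that $H_c|\Psi\rangle=0$ and $H_c|\Phi_1\rangle\notin\mathcal H_0$.
   Context: $\mathcal H=\bigotimes_{a=1}^n\mathcal H_a$ finite-dimensional with neighborhoods $\mathcal N_k\subsetneq\{1,\dots,n\}$. QL operator: $X_{\mathcal N_k}\otimes I_{\bar{\mathcal N}_k}$; QL Hamiltonian: sum of Hermitian QL operators. $\mathcal L(H,\{D_k\})(\rho)=-i[H,\rho]+\sum_k(D_k\rho D_k^\dagger-\frac12\{D_k^\dagger D_k,\rho\})$. GAS: $e^{\mathcal Lt}(\rho_0)\to\rho_d$ for every density operator $\rho_0$. QLS: there exist a QL Hamiltonian $H_c$ and QL $D_k$ with $D_k|\Psi\rangle=0$, $H_c|\Psi\rangle\in\mathbb R|\Psi\rangle$, making $\rho_d$ GAS for $\mathcal L(H_c,\{D_k\})$; DQLS: same with $H_c=0$. $\mathcal H_0=\bigcap_k\mathrm{supp}(\rho_{\mathcal N_k}\otimes I_{\bar{\mathcal N}_k})$, $\rho_{\mathcal N_k}=\mathrm{Tr}_{\bar{\mathcal N}_k}\rho_d$. *)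

(* Defs.v *)
From Stdlib Require Import Reals.
From HB Require Import structures.
From mathcomp Require Import all_boot.

Set Implicit Arguments.
Unset Strict Implicit.
Unset Printing Implicit Defensive.
Local Open Scope R_scope.

Record Cplx := mkC { Re : R; Im : R }.
Definition Czero : Cplx := mkC 0 0.
Definition Cone : Cplx := mkC 1 0.
Definition Ci : Cplx := mkC 0 1.
Definition Cadd (u v : Cplx) : Cplx := mkC (Re u + Re v) (Im u + Im v).
Definition Copp (u : Cplx) : Cplx := mkC (- Re u) (- Im u).
Definition Cmul (u v : Cplx) : Cplx :=
  mkC (Re u * Re v - Im u * Im v) (Re u * Im v + Im u * Re v).
Definition Cconj (u : Cplx) : Cplx := mkC (Re u) (- Im u).
Definition RtoC (r : R) : Cplx := mkC r 0.

(* ---------- the composite Hilbert space H = (x)_{a=1}^n H_a ----------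
   Subsystem a : 'I_n has dimension d a; the product basis of H is indexed
   by configurations x : Ix d (x a is the basis label of subsystem a).    *)
Definition Ix (n : nat) (d : 'I_n -> nat) := {dffun forall a : 'I_n, 'I_(d a)}.

Section Ops.
Variables (n : nat) (d : 'I_n -> nat).
Local Notation Ix := (Ix d).

Definition Vec := Ix -> Cplx.
Definition Op := Ix -> Ix -> Cplx.

Definition Csum (F : Ix -> Cplx) : Cplx := \big[Cadd/Czero]_(z : Ix) F z.

Definition Opzero : Op := fun _ _ => Czero.
Definition Opadd (A B : Op) : Op := fun x y => Cadd (A x y) (B x y).
Definition Opscale (c : Cplx) (A : Op) : Op := fun x y => Cmul c (A x y).
Definition Opmul (A B : Op) : Op := fun x y => Csum (fun z => Cmul (A x z) (B z y)).
Definition adj (A : Op) : Op := fun x y => Cconj (A y x).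
Definition apply (A : Op) (v : Vec) : Vec := fun x => Csum (fun z => Cmul (A x z) (v z)).
Definition inner (u v : Vec) : Cplx := Csum (fun x => Cmul (Cconj (u x)) (v x)).
Definition hermitian (A : Op) : Prop := forall x y, A x y = adj A x y.
Definition proj (Psi : Vec) : Op := fun x y => Cmul (Psi x) (Cconj (Psi y)).

Definition density (rho : Op) : Prop :=
  hermitian rho /\ (forall v : Vec, (0 <= Re (inner v (apply rho v)))) /\
  Csum (fun x => rho x x) = Cone.

Definition agree_out (N : {set 'I_n}) (x y : Ix) : bool :=
  [forall a, (a \notin N) ==> (x a == y a)].

(* A = X_N (x) I_{complement of N}: its matrix entries are those of an operator
   on the N-subsystems (a function of the N-labels only) times the identity
   on the complement. *)
Definition is_QL (N : {set 'I_n}) (A : Op) : Prop :=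
  exists f : Op,
    (forall x y x' y' : Ix, (forall a, a \in N -> x a = x' a /\ y a = y' a) ->
       f x y = f x' y') /\
    (forall x y : Ix, A x y = if agree_out N x y then f x y else Czero).

Variable (K : nat) (Nb : 'I_K -> {set 'I_n}).

Definition QL_op (A : Op) : Prop := exists k, is_QL (Nb k) A.

Definition QL_Ham (H : Op) : Prop :=
  exists s : seq Op,
    (forall A, List.In A s -> hermitian A /\ QL_op A) /\
    (forall x y, H x y = \big[Cadd/Czero]_(A <- s) A x y).

Definition comm (A B : Op) : Op := Opadd (Opmul A B) (Opscale (Copp Cone) (Opmul B A)).
Definition acomm (A B : Op) : Op := Opadd (Opmul A B) (Opmul B A).

Definition Lindblad (H : Op) (Ds : seq Op) (rho : Op) : Op :=
  Opadd (Opscale (Copp Ci) (comm H rho))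
        (fun x y => \big[Cadd/Czero]_(D <- Ds)
            Opadd (Opmul (Opmul D rho) (adj D))
                  (Opscale (RtoC (- / 2)) (acomm (Opmul (adj D) D) rho)) x y).

(* X t = e^{L t}(rho0) for t >= 0, entrywise as the exponential series
   sum_k t^k/k! L^k(rho0). *)
Definition is_flow (L : Op -> Op) (rho0 : Op) (X : R -> Op) : Prop :=
  forall t, (0 <= t) -> forall x y,
    infinite_sum (fun k => (Re (iter k L rho0 x y) * t ^ k / INR (Factorial.fact k)))
                 (Re (X t x y)) /\
    infinite_sum (fun k => (Im (iter k L rho0 x y) * t ^ k / INR (Factorial.fact k)))
                 (Im (X t x y)).

Definition conv_infty (f : R -> R) (l : R) : Prop :=
  forall eps, (0 < eps) -> exists T, forall t, (T <= t) -> (Rabs (f t - l) < eps).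

Definition GAS (L : Op -> Op) (rhod : Op) : Prop :=
  forall rho0, density rho0 -> forall X, is_flow L rho0 X ->
    forall x y, conv_infty (fun t => Re (X t x y)) (Re (rhod x y)) /\
                conv_infty (fun t => Im (X t x y)) (Im (rhod x y)).

Definition QLS (Psi : Vec) : Prop :=
  exists (Hc : Op) (Ds : seq Op),
    QL_Ham Hc /\
    (forall D, List.In D Ds -> QL_op D /\ forall x, apply D Psi x = Czero) /\
    (exists r : R, forall x, apply Hc Psi x = Cmul (RtoC r) (Psi x)) /\
    GAS (Lindblad Hc Ds) (proj Psi).

Definition DQLS (Psi : Vec) : Prop :=
  exists Ds : seq Op,
    (forall D, List.In D Ds -> QL_op D /\ forall x, apply D Psi x = Czero) /\
    GAS (Lindblad Opzero Ds) (proj Psi).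

(* matrix of rho_N (x) I_{complement of N}, with rho_N = Tr_{complement} rho *)
Definition merge (N : {set 'I_n}) (x z : Ix) : Ix :=
  [ffun a => if a \in N then x a else z a].

Definition ptr_ext (N : {set 'I_n}) (rho : Op) : Op := fun x y =>
  if agree_out N x y then
    \big[Cadd/Czero]_(z : Ix | [forall a, (a \in N) ==> (z a == x a)])
       rho (merge N x z) (merge N y z)
  else Czero.

(* support of a Hermitian (PSD) operator = its range *)
Definition in_supp (A : Op) (v : Vec) : Prop :=
  exists w : Vec, forall x, v x = apply A w x.

Definition in_H0 (rho : Op) (v : Vec) : Prop :=
  forall k, in_supp (ptr_ext (Nb k) rho) v.

End Ops.

(* Main.v *)
Require Import Defs.
From Stdlib Require Import Reals.
From HB Require Import structures.
From mathcomp Require Import all_boot.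
From Stdlib Require Import Lra Classical FunctionalExtensionality.
Require Import Defs.
Set Implicit Arguments. Unset Strict Implicit.
Open Scope R_scope.

Lemma Cext u v : Re u = Re v -> Im u = Im v -> u = v.
Proof. by case: u => a b; case: v => c e /= -> ->. Qed.
Ltac csimp := apply Cext; cbn [Re Im Cadd Cmul Cconj Copp RtoC Czero Cone Ci]; ring.

Lemma CaddA : associative Cadd. Proof. move=> *; csimp. Qed.
Lemma CaddC : commutative Cadd. Proof. move=> *; csimp. Qed.
Lemma Cadd0 : left_id Czero Cadd. Proof. move=> *; csimp. Qed.
Lemma CmulA : associative Cmul. Proof. move=> *; csimp. Qed.
Lemma CmulC : commutative Cmul. Proof. move=> *; csimp. Qed.
Lemma Cmul1 : left_id Cone Cmul. Proof. move=> *; csimp. Qed.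
Lemma Cmul0l : left_zero Czero Cmul. Proof. move=> *; csimp. Qed.
Lemma Cmul0r : right_zero Czero Cmul. Proof. move=> *; csimp. Qed.
Lemma CmulDl : left_distributive Cmul Cadd. Proof. move=> *; csimp. Qed.
Lemma CmulDr : right_distributive Cmul Cadd. Proof. move=> *; csimp. Qed.

HB.instance Definition _ := Monoid.isComLaw.Build Cplx Czero Cadd CaddA CaddC Cadd0.
HB.instance Definition _ := Monoid.isComLaw.Build Cplx Cone Cmul CmulA CmulC Cmul1.
HB.instance Definition _ := Monoid.isMulLaw.Build Cplx Czero Cmul Cmul0l Cmul0r.
HB.instance Definition _ := Monoid.isAddLaw.Build Cplx Cmul Cadd CmulDl CmulDr.

Lemma Csum_distrl n (d : 'I_n -> nat) (F : Ix d -> Cplx) c :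
  Cmul c (Csum F) = Csum (fun z => Cmul c (F z)).
Proof. by rewrite /Csum big_distrr. Qed.
Lemma Cconj_sum n (d : 'I_n -> nat) (F : Ix d -> Cplx) :
  Cconj (Csum F) = Csum (fun z => Cconj (F z)).
Proof. rewrite /Csum (big_morph Cconj (id1:=Czero) (op1:=Cadd)) //; [move=>*; csimp | csimp]. Qed.
Lemma Csum_ext n (d : 'I_n -> nat) (F G : Ix d -> Cplx) :
  (forall z, F z = G z) -> Csum F = Csum G.
Proof. by move=> h; rewrite /Csum; apply: eq_bigr => z _; apply: h. Qed.
Lemma Csum_mulr n (d : 'I_n -> nat) (F : Ix d -> Cplx) c :
  Cmul (Csum F) c = Csum (fun z => Cmul (F z) c).
Proof. by rewrite /Csum big_distrl. Qed.
Lemma Csum_zero n (d : 'I_n -> nat) (F : Ix d -> Cplx) :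
  (forall z, F z = Czero) -> Csum F = Czero.
Proof. by move=> h; rewrite /Csum big1 // => z _; apply: h. Qed.
Lemma Csum_exch n (d : 'I_n -> nat) (F : Ix d -> Ix d -> Cplx) :
  Csum (fun x => Csum (fun y => F x y)) = Csum (fun y => Csum (fun x => F x y)).
Proof. by rewrite /Csum exchange_big. Qed.
Lemma Csum_add n (d : 'I_n -> nat) (F G : Ix d -> Cplx) :
  Csum (fun z => Cadd (F z) (G z)) = Cadd (Csum F) (Csum G).
Proof. by rewrite /Csum big_split. Qed.
Lemma Csum_if_eq n (d : 'I_n -> nat) (m : Ix d) (G : Ix d -> Cplx) :
  Csum (fun u => if u == m then G u else Czero) = G m.
Proof. by rewrite /Csum -big_mkcond big_pred1_eq. Qed.

Lemma apply_proj n (d : 'I_n -> nat) (u v : Vec d) x :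
  apply (proj u) v x = Cmul (u x) (inner u v).
Proof. rewrite /apply /inner Csum_distrl; apply: Csum_ext => z; rewrite /proj; csimp. Qed.

Lemma inner_conj n (d : 'I_n -> nat) (u v : Vec d) : Cconj (inner u v) = inner v u.
Proof. rewrite /inner Cconj_sum; apply: Csum_ext => z; csimp. Qed.

Lemma apply_mul n (d : 'I_n -> nat) (A B : Op d) v x :
  apply (Opmul A B) v x = apply A (apply B v) x.
Proof.
rewrite /apply /Opmul.
transitivity (Csum (fun z => Csum (fun u => Cmul (A x u) (Cmul (B u z) (v z))))).
  by apply: Csum_ext => z; rewrite Csum_mulr; apply: Csum_ext => u; csimp.
by rewrite Csum_exch; apply: Csum_ext => u; rewrite Csum_distrl.
Qed.

Lemma herm_inner n (d : 'I_n -> nat) (A : Op d) u v : hermitian A ->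
  inner u (apply A v) = inner (apply A u) v.
Proof.
move=> hA; rewrite /inner /apply.
transitivity (Csum (fun x => Csum (fun z => Cmul (Cmul (Cconj (u x)) (A x z)) (v z)))).
  by apply: Csum_ext => x; rewrite Csum_distrl; apply: Csum_ext => z; csimp.
rewrite Csum_exch; apply: Csum_ext => z; rewrite Cconj_sum Csum_mulr.
apply: Csum_ext => x; rewrite (hA x z) /adj; csimp.
Qed.

Lemma opmul_proj_r n (d : 'I_n -> nat) (A : Op d) v x y :
  Opmul A (proj v) x y = Cmul (apply A v x) (Cconj (v y)).
Proof. rewrite /Opmul /apply Csum_mulr; apply: Csum_ext => z; rewrite /proj; csimp. Qed.

Lemma opmul_proj_l n (d : 'I_n -> nat) (A : Op d) v x y :
  Opmul (proj v) A x y = Cmul (v x) (Cconj (apply (adj A) v y)).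
Proof.
rewrite /Opmul /apply Cconj_sum Csum_distrl; apply: Csum_ext => z; rewrite /proj /adj; csimp.
Qed.

Lemma apply_herm_adj n (d : 'I_n -> nat) (A : Op d) v x : hermitian A ->
  apply (adj A) v x = apply A v x.
Proof. by move=> hA; rewrite /apply; apply: Csum_ext => z; rewrite -hA. Qed.

Lemma herm_DD n (d : 'I_n -> nat) (D : Op d) : hermitian (Opmul (adj D) D).
Proof.
move=> x y; rewrite /adj /Opmul Cconj_sum; apply: Csum_ext => z; csimp.
Qed.

Lemma big_seq_zero n (d : 'I_n -> nat) (Ds : seq (Op d)) (F : Op d -> Cplx) :
  (forall D, List.In D Ds -> F D = Czero) -> \big[Cadd/Czero]_(D <- Ds) F D = Czero.
Proof.
elim: Ds => [|D Ds IH] h; first by rewrite big_nil.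
rewrite big_cons h /=; last by left.
rewrite IH; first csimp. by move=> D' hD'; apply: h; right.
Qed.

Lemma stationary n (d : 'I_n -> nat) (H : Op d) (Ds : seq (Op d)) (v : Vec d) (l : R) :
  hermitian H -> (forall x, apply H v x = Cmul (RtoC l) (v x)) ->
  (forall D, List.In D Ds -> forall x, apply D v x = Czero) ->
  forall x y, Lindblad H Ds (proj v) x y = Czero.
Proof.
move=> hH hv hD x y; rewrite /Lindblad /Opadd /Opscale /comm /Opadd /Opscale.
rewrite big_seq_zero.
  rewrite opmul_proj_r opmul_proj_l apply_herm_adj // !hv; csimp.
move=> D hDs; rewrite /acomm /Opadd /Opscale.
have h1 : Opmul (Opmul D (proj v)) (adj D) x y = Czero.
  rewrite /Opmul; apply: Csum_zero => z.
  have e := opmul_proj_r D v x z; rewrite hD // /Opmul in e; rewrite e; csimp.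
have h2 : forall w, apply (Opmul (adj D) D) v w = Czero.
  move=> w; rewrite apply_mul; apply: Csum_zero => z; rewrite hD //; csimp.
rewrite h1 opmul_proj_r opmul_proj_l apply_herm_adj; last exact: herm_DD.
rewrite !h2; csimp.
Qed.

Lemma mergeE n (d : 'I_n -> nat) (N : {set 'I_n}) (x z : Ix d) a :
  merge N x z a = if a \in N then x a else z a.
Proof. by rewrite /merge ffunE. Qed.

Lemma eq_mergeP n (d : 'I_n -> nat) (N : {set 'I_n}) (u z y : Ix d) :
  reflect ((forall a, a \in N -> u a = z a) /\ (forall a, a \notin N -> u a = y a))
          (u == merge N z y).
Proof.
apply: (iffP eqP).
  by move=> ->; split=> a ha; rewrite mergeE ?ha // (negbTE ha).
case=> h1 h2; apply/ffunP => a; rewrite mergeE; case: ifP => ha.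
  by rewrite h1. by rewrite h2 // ha.
Qed.

Lemma agree_outP n (d : 'I_n -> nat) (N : {set 'I_n}) (x y : Ix d) :
  reflect (forall a, a \notin N -> x a = y a) (agree_out N x y).
Proof.
apply: (iffP forallP) => h a.
  by move=> ha; have := h a; rewrite ha /= => /eqP.
by apply/implyP => ha; apply/eqP; apply: h.
Qed.

Lemma ptrE n (d : 'I_n -> nat) (N : {set 'I_n}) (Psi : Vec d) u y :
  ptr_ext N (proj Psi) u y =
  Csum (fun z => if u == merge N z y then Cmul (Psi z) (Cconj (Psi (merge N y z))) else Czero).
Proof.
rewrite /ptr_ext; case: (agree_outP N u y) => hao.
  rewrite /Csum big_mkcond /=; apply: eq_bigr => z _.
  have -> : [forall a, (a \in N) ==> (z a == u a)] = (u == merge N z y).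
    apply/idP/idP.
      move/forallP => h; apply/eq_mergeP; split=> a ha; last by apply: hao.
      by have := h a; rewrite ha /= => /eqP ->.
    case/eq_mergeP => h1 _; apply/forallP => a; apply/implyP => ha; by rewrite h1.
  case: ifP => // /eqP hu.
  have -> : merge N u z = z.
    apply/ffunP => a; rewrite mergeE; case: ifP => ha //.
    by rewrite hu mergeE ha.
  by [].
symmetry; apply: Csum_zero => z; case: ifP => // /eq_mergeP [_ h2]; exfalso.
by apply: hao => a ha; rewrite h2 // mergeE (negbTE ha).
Qed.

Lemma annih n (d : 'I_n -> nat) (N : {set 'I_n}) (D : Op d) (Psi v0 w : Vec d) :
  is_QL N D -> (forall x, apply D Psi x = Czero) ->
  (forall x, v0 x = apply (ptr_ext N (proj Psi)) w x) ->
  forall x, apply D v0 x = Czero.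
Proof.
move=> [f [Hf HD]] hPsi hv x.
rewrite /apply.
transitivity (Csum (fun u => Csum (fun y => Csum (fun z =>
   if u == merge N z y then Cmul (D x u) (Cmul (Cmul (Psi z) (Cconj (Psi (merge N y z)))) (w y))
   else Czero)))).
  apply: Csum_ext => u; rewrite hv /apply Csum_distrl; apply: Csum_ext => y.
  rewrite ptrE Csum_mulr Csum_distrl; apply: Csum_ext => z; case: ifP => _; csimp.
rewrite Csum_exch; apply: Csum_zero => y; rewrite Csum_exch.
transitivity (Csum (fun z => Cmul (D x (merge N z y))
                  (Cmul (Cmul (Psi z) (Cconj (Psi (merge N y z)))) (w y)))).
  by apply: Csum_ext => z; rewrite Csum_if_eq.
case: (agree_outP N x y) => hxy; last first.
  apply: Csum_zero => z; rewrite HD; case: (agree_outP N x (merge N z y)) => h.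
    by exfalso; apply: hxy => a ha; rewrite h // mergeE (negbTE ha).
  csimp.
have key : Csum (fun z => Cmul (f x z) (Cmul (Psi z) (Cconj (Psi (merge N y z))))) = Czero.
  transitivity (Csum (fun z => Csum (fun v => if v == merge N x z then
      Cmul (Cconj (Psi (merge N y v))) (Cmul (f x z) (Psi z)) else Czero))).
    apply: Csum_ext => z; rewrite Csum_if_eq.
    have -> : merge N y (merge N x z) = merge N y z.
      by apply/ffunP => a; rewrite !mergeE; case: (a \in N).
    csimp.
  rewrite Csum_exch; apply: Csum_zero => v.
  case: (boolP [forall a, (a \in N) ==> (v a == x a)]) => hvx.
    have hvN : forall a, a \in N -> v a = x a.
      by move=> a ha; move/forallP: hvx => /(_ a); rewrite ha /= => /eqP.
    transitivity (Cmul (Cconj (Psi (merge N y v))) (apply D Psi v)); last by rewrite hPsi; csimp.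
    rewrite /apply Csum_distrl; apply: Csum_ext => z; rewrite HD.
    have fe : f x z = f v z.
      by apply: Hf => a ha; split => //; rewrite hvN.
    case: (agree_outP N v z) => hvz; case: eqP => hm.
    - rewrite fe; csimp.
    - exfalso; apply: hm; apply/ffunP => a; rewrite mergeE; case: ifP => ha.
        by rewrite hvN. by rewrite hvz // ha.
    - exfalso; apply: hvz => a ha; rewrite hm mergeE (negbTE ha) //.
    - csimp.
  apply: Csum_zero => z; case: eqP => // hm; exfalso.
  move/negP: hvx; apply; apply/forallP => a; apply/implyP => ha.
  by rewrite hm mergeE ha.
transitivity (Cmul (Csum (fun z => Cmul (f x z) (Cmul (Psi z) (Cconj (Psi (merge N y z)))))) (w y)).
  rewrite Csum_mulr; apply: Csum_ext => z; rewrite HD.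
  case: (agree_outP N x (merge N z y)) => h; last first.
    by exfalso; apply: h => a ha; rewrite hxy // mergeE (negbTE ha).
  have -> : f x (merge N z y) = f x z.
    by apply: Hf => a ha; split => //; rewrite mergeE ha.
  csimp.
rewrite key; csimp.
Qed.

Lemma QL_Ham_herm n (d : 'I_n -> nat) K (Nb : 'I_K -> {set 'I_n}) (H : Op d) :
  QL_Ham Nb H -> hermitian H.
Proof.
move=> [s [hs hH]] x y; rewrite /adj !hH; clear hH.
elim: s hs => [|A s IH] hs; first by rewrite !big_nil; csimp.
rewrite !big_cons; have [hA _] := hs A (or_introl erefl).
rewrite IH; last by move=> B hB; apply: hs; right.
rewrite (hA x y) /adj; csimp.
Qed.

Lemma density_proj n (d : 'I_n -> nat) (v : Vec d) : inner v v = Cone -> density (proj v).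
Proof.
move=> hv; split; [|split].
- move=> x y; rewrite /adj /proj; csimp.
- move=> u; have -> : inner u (apply (proj v) u) = Cmul (inner u v) (inner v u).
    rewrite /inner Csum_mulr; apply: Csum_ext => z; rewrite apply_proj /inner; csimp.
  rewrite -(inner_conj v u); case: (inner v u) => a b /=; nra.
- rewrite -hv /inner; apply: Csum_ext => z; rewrite /proj; csimp.
Qed.

Lemma infsum_first (g : nat -> R) c : g 0%nat = c -> (forall k, g (S k) = 0) ->
  infinite_sum g c.
Proof.
move=> h0 hS.
have hs : forall m, sum_f_R0 g m = c.
  elim=> [|m IH] /=; first by [].
  by rewrite IH hS; ring.
move=> eps heps; exists 0%nat => m _; rewrite hs /R_dist Rminus_diag Rabs_R0 //.
Qed.

Lemma const_lim c l : conv_infty (fun _ => c) l -> c = l.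
Proof.
move=> h; destruct (Req_dec c l) as [e|ne]; first exact e.
have hp : 0 < Rabs (c - l) by apply: Rabs_pos_lt; lra.
have [T hT] := h _ hp; have := hT T (Rle_refl T); lra.
Qed.

Lemma no_GAS n (d : 'I_n -> nat) (Hc : Op d) (Ds : seq (Op d)) (Psi Phi : Vec d) (l : R) :
  hermitian Hc -> (forall x, apply Hc Phi x = Cmul (RtoC l) (Phi x)) ->
  (forall D, List.In D Ds -> forall x, apply D Phi x = Czero) ->
  inner Phi Phi = Cone -> inner Psi Phi = Czero ->
  GAS (Lindblad Hc Ds) (proj Psi) -> False.
Proof.
move=> hH hPhi hD h1 horth hG.
set L := Lindblad Hc Ds.
have hL0 : L (proj Phi) = Opzero (d:=d).
  by apply: functional_extensionality => x; apply: functional_extensionality => y;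
     apply: (stationary hH hPhi hD).
have hz : Opzero (d:=d) = proj (fun _ : Ix d => Czero).
  by apply: functional_extensionality => x; apply: functional_extensionality => y;
     rewrite /proj /Opzero; csimp.
have hLz : L (Opzero (d:=d)) = Opzero (d:=d).
  rewrite {1}hz; apply: functional_extensionality => x; apply: functional_extensionality => y.
  rewrite /L (stationary (l:=l) hH) /Opzero //.
    by move=> z; rewrite /apply Csum_zero => [|u]; csimp.
  by move=> D _ z; rewrite /apply Csum_zero => [|u]; csimp.
have hit : forall k, iter k.+1 L (proj Phi) = Opzero (d:=d).
  by elim=> [|k IH]; [exact: hL0 | rewrite iterS IH].
have hflow : is_flow L (proj Phi) (fun _ => proj Phi).
  move=> t ht x y; split; apply: infsum_first.
  1-4: try move=> k.
  2: rewrite hit /Opzero /= /Rdiv; ring.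
  all: try (rewrite hit /Opzero /= /Rdiv; ring).
  1-2: by rewrite /= Rdiv_1_r Rmult_1_r.
have heq : forall x y, proj Phi x y = proj Psi x y.
  move=> x y; have [c1 c2] := hG _ (density_proj h1) _ hflow x y.
  by apply: Cext; apply: const_lim.
have h0 : forall x, Phi x = Czero.
  move=> x; transitivity (apply (proj Phi) Phi x); first by rewrite apply_proj h1; csimp.
  transitivity (apply (proj Psi) Phi x); first by apply: Csum_ext => z; rewrite heq.
  by rewrite apply_proj horth; csimp.
have : inner Phi Phi = Czero by apply: Csum_zero => z; rewrite h0; csimp.
rewrite h1 => /(f_equal Re) /=; lra.
Qed.

Lemma inner_lin n (d : 'I_n -> nat) (u v w : Vec d) a b :
  inner u (fun x => Cadd (Cmul a (v x)) (Cmul b (w x))) =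
  Cadd (Cmul a (inner u v)) (Cmul b (inner u w)).
Proof. rewrite /inner !Csum_distrl -Csum_add; apply: Csum_ext => z; csimp. Qed.

Theorem corollary3 (n : nat) (d : 'I_n -> nat) (K : nat)
  (Nb : 'I_K -> {set 'I_n})
  (HNb : forall k, Nb k \proper [set: 'I_n])
  (Psi Phi1 : Vec d)
  (HPsi : inner Psi Psi = Cone) (HPhi : inner Phi1 Phi1 = Cone)
  (Horth : inner Psi Phi1 = Czero)
  (Hqls : QLS Nb Psi) (Hndqls : ~ DQLS Nb Psi)
  (HH0 : forall v : Vec d, in_H0 Nb (proj Psi) v <->
           exists a b : Cplx, forall x, v x = Cadd (Cmul a (Psi x)) (Cmul b (Phi1 x))) :
  exists Hc : Op d,
    QL_Ham Nb Hc /\ (forall x, apply Hc Psi x = Czero) /\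
    ~ in_H0 Nb (proj Psi) (apply Hc Phi1).
Proof.
have [Hc [Ds [HHc [HDs [[r Hr] HG]]]]] := Hqls.
have hHc := QL_Ham_herm HHc.
have Phi_H0 : in_H0 Nb (proj Psi) Phi1.
  by apply/HH0; exists Czero, Cone => x; csimp.
have hD : forall D, List.In D Ds -> forall x, apply D Phi1 x = Czero.
  move=> D hDin; have [[k hk] hDPsi] := HDs D hDin.
  have [w hw] := Phi_H0 k; exact: (annih hk hDPsi hw).
apply: NNPP => Hneg.
suff [l hl] : exists l, forall x, apply Hc Phi1 x = Cmul (RtoC l) (Phi1 x).
  exact: (no_GAS hHc hl hD HPhi Horth HG).
have [s [hs hH]] := HHc.
case: (pickP (fun _ : 'I_K => true)) => [k0 _ | hnone]; last first.
  exists 0 => x; transitivity Czero; last csimp.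
  apply: Csum_zero => z; rewrite hH.
  case: s hs {hH} => [|A s] hs; first by rewrite big_nil; csimp.
  by exfalso; have [_ [k _]] := hs A (or_introl erefl); have := hnone k.
pose Id : Op d := fun x y => if y == x then Cone else Czero.
pose A0 : Op d := Opscale (RtoC (- r)) Id.
pose Hc' : Op d := fun x y => \big[Cadd/Czero]_(A <- A0 :: s) A x y.
have hA0 : hermitian A0 /\ QL_op Nb A0.
  split.
    move=> x y; rewrite /A0 /Opscale /adj /Id eq_sym; case: eqP => _; csimp.
  exists k0; set N := Nb k0.
  exists (fun x y => Cmul (RtoC (- r))
            (if [forall a, (a \in N) ==> (y a == x a)] then Cone else Czero)); split.
    move=> x y x' y' h; congr Cmul; congr (if _ then _ else _).
    apply: eq_forallb => a; case: (boolP (a \in N)) => ha //=.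
    by have [-> ->] := h a ha.
  move=> x y; rewrite /A0 /Opscale /Id; case: (agree_outP N x y) => hao.
    have -> : (y == x) = [forall a, (a \in N) ==> (y a == x a)].
      apply/eqP/forallP => [-> a | h]; first by apply/implyP => _.
      apply/ffunP => a; case: (boolP (a \in N)) => ha.
        by move/implyP/(_ ha)/eqP: (h a).
      by rewrite (hao a ha).
    by [].
  case: eqP => // hyx; last csimp.
  by exfalso; apply: hao => a _; rewrite hyx.
have HHc' : QL_Ham Nb Hc'.
  exists (A0 :: s); split => // A [<- | hA]; [exact: hA0 | exact: hs].
have happ : forall u x, apply Hc' u x = Cadd (Cmul (RtoC (- r)) (u x)) (apply Hc u x).
  move=> u x; rewrite /apply.
  transitivity (Csum (fun z => Cadd (if z == x then Cmul (Cmul (RtoC (- r)) Cone) (u z) else Czero)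
                                  (Cmul (Hc x z) (u z)))).
    apply: Csum_ext => z; rewrite /Hc' big_cons -hH /A0 /Opscale /Id.
    case: eqP => [->|_]; rewrite ?eqxx; csimp.
  rewrite Csum_add Csum_if_eq; csimp.
have hPsi' : forall x, apply Hc' Psi x = Czero.
  by move=> x; rewrite happ Hr; csimp.
have hin : in_H0 Nb (proj Psi) (apply Hc' Phi1).
  by apply: NNPP => hn; apply: Hneg; exists Hc'.
move/HH0: hin => [a [b hab]].
have hH' := QL_Ham_herm HHc'.
have hfun : apply Hc' Phi1 = fun x => Cadd (Cmul a (Psi x)) (Cmul b (Phi1 x)).
  by apply: functional_extensionality.
have ha : a = Czero.
  have e := herm_inner Psi Phi1 hH'.
  rewrite hfun inner_lin HPsi Horth in e.
  have e2 : inner (apply Hc' Psi) Phi1 = Czero.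
    by apply: Csum_zero => z; rewrite hPsi'; csimp.
  rewrite e2 in e; apply: Cext; have := f_equal Re e; have := f_equal Im e; cbn; lra.
have h10 : inner Phi1 Psi = Czero by rewrite -inner_conj Horth; csimp.
have hb : Im b = 0.
  have e := herm_inner Phi1 Phi1 hH'.
  rewrite -(inner_conj Phi1 (apply Hc' Phi1)) in e.
  rewrite hfun inner_lin h10 HPhi ha in e.
  have := f_equal Im e; cbn; lra.
exists (Re b + r) => x.
have e1 := happ Phi1 x; rewrite hab ha in e1.
apply: Cext; have := f_equal Re e1; have := f_equal Im e1; cbn; rewrite hb; nra.
Qed.
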